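(* Let $d\ge 3$. For every $1\le i<d$, the element $a_1a_2\cdots a_i$ has infinite order in $G_d$.
   Context: Let $d\ge 3$, $X=\{1,\dots,d\}$, $T$ the $d$-regular rooted tree with vertex set $X^*$. $\mathrm{Aut}(T)$ is the group of root-preserving automorphisms with product left-to-right: $(gh)(u)=h(g(u))$. Sections $g|_u$ are defined by $g(uv)=g(u)\,g|_u(v)$; we write $g=(g|_1,\dots,g|_d)\lambda_g$ with $\lambda_g\in S_d$ the action on the first level; $e$ is the identity; $\overline{j}\in\{1,\dots,d\}$ denotes $j$ mod $d$. $G_d=\langle a_1,\dots,a_d\rangle\le\mathrm{Aut}(T)$ where $a_i$ acts on the first level as $(i\ \overline{i+1})$, with $a_i|_i=a_i$, $a_i|_{\overline{i+1}}=a_{\overline{i+1}}$, and $a_i|_x=e$ otherwise. *)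

(* Defs.v *)
From mathcomp Require Import all_boot.
Set Implicit Arguments. Unset Strict Implicit. Unset Printing Implicit Defensive.

(* Alphabet X = {1,...,d} encoded as natural numbers 1..d; vertices of the
   d-regular rooted tree T are words over X, i.e. sequences of such naturals. *)
Definition is_letter (d x : nat) : bool := (1 <= x <= d).
Definition is_vertex (d : nat) (u : seq nat) : bool := all (is_letter d) u.

(* \overline{j+1} : the successor of j in {1..d} taken mod d (d |-> 1). *)
Definition nxt (d j : nat) : nat := (j %% d).+1.

(* Action of the generator a_i on vertices:
   a_i = (sections) (i  i+1), with a_i|_i = a_i, a_i|_{i+1} = a_{i+1},
   a_i|_x = e otherwise; g(x v) = lambda_g(x) g|_x(v). *)
Fixpoint act_a (d i : nat) (w : seq nat) : seq nat :=
  match w with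
  | [::] => [::]
  | x :: v =>
      if x == i then nxt d i :: act_a d i v
      else if x == nxt d i then i :: act_a d (nxt d i) v
      else x :: v
  end.

(* Action of the product a_{s_1} a_{s_2} ... a_{s_k} with the left-to-right
   convention (gh)(u) = h(g(u)): first apply a_{s_1}, then a_{s_2}, ... *)
Definition act_prod (d : nat) (s : seq nat) (u : seq nat) : seq nat :=
  foldl (fun w j => act_a d j w) u s.

Definition infinite_order (d : nat) (g : seq nat -> seq nat) : Prop :=
  forall n : nat, 0 < n -> exists u : seq nat, is_vertex d u /\ iter n g u <> u.

(* Main.v *)
Require Import Defs.
From mathcomp Require Import all_boot zify.
From Stdlib Require Import Classical.
Set Implicit Arguments. Unset Strict Implicit. Unset Printing Implicit Defensive.


Definition st1 d j x : nat * seq nat :=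
  if x == j then (nxt d j, [:: j])
  else if x == nxt d j then (j, [:: nxt d j]) else (x, [::]).

Fixpoint stp d (s : seq nat) x : nat * seq nat :=
  match s with
  | [::] => (x, [::])
  | j :: s' => ((stp d s' (st1 d j x).1).1, (st1 d j x).2 ++ (stp d s' (st1 d j x).1).2)
  end.

Lemma act_a_st1 d j x v :
  act_a d j (x :: v) = (st1 d j x).1 :: act_prod d (st1 d j x).2 v.
Proof. by rewrite /st1 /=; case: eqP => _ //; case: eqP. Qed.

Lemma act_stp d s x v :
  act_prod d s (x :: v) = (stp d s x).1 :: act_prod d (stp d s x).2 v.
Proof.
elim: s x v => [|j s IH] x v //.
change (act_prod d s (act_a d j (x :: v)) = (stp d (j :: s) x).1 :: act_prod d (stp d (j :: s) x).2 v).
rewrite act_a_st1 IH /=.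
by rewrite /act_prod foldl_cat.
Qed.

Lemma stp_cat d s1 s2 x :
  stp d (s1 ++ s2) x =
  ((stp d s2 (stp d s1 x).1).1, (stp d s1 x).2 ++ (stp d s2 (stp d s1 x).1).2).
Proof.
elim: s1 x => [|j s IH] x /=; first by case: (stp d s2 x).
by rewrite IH /= catA.
Qed.

Lemma stp_cons d j s x : stp d (j :: s) x =
  ((stp d s (st1 d j x).1).1, (st1 d j x).2 ++ (stp d s (st1 d j x).1).2).
Proof. by []. Qed.

Lemma nxt_lt d j : j < d -> nxt d j = j.+1.
Proof. by move=> h; rewrite /nxt modn_small. Qed.

Lemma nxt_d d : 0 < d -> nxt d d = 1.
Proof. by move=> h; rewrite /nxt modnn. Qed.

Lemma st1_eq d j : st1 d j j = (nxt d j, [:: j]).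
Proof. by rewrite /st1 eqxx. Qed.

Lemma st1_nxt d j x : x = nxt d j -> x != j -> st1 d j x = (j, [:: nxt d j]).
Proof. by move=> -> h; rewrite /st1 (negbTE h) eqxx. Qed.

Lemma st1_oth d j x : x != j -> x != nxt d j -> st1 d j x = (x, [::]).
Proof. by move=> h1 h2; rewrite /st1 (negbTE h1) (negbTE h2). Qed.

Lemma U1 d a n : a + n <= d -> stp d (iota a n) a = (a + n, iota a n).
Proof.
elim: n a => [|n IH] a h /=; first by rewrite addn0.
rewrite st1_eq nxt_lt; last by lia.
rewrite IH /=; last by lia.
by rewrite addSnnS.
Qed.

Lemma U3 d a n x : a + n <= d -> (x < a) || (a + n < x) -> stp d (iota a n) x = (x, [::]).
Proof.
elim: n a => [|n IH] a h hx //=.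
rewrite st1_oth; first (rewrite IH //=; lia).
- apply/eqP; lia.
- rewrite nxt_lt; last lia. apply/eqP; lia.
Qed.

Lemma U2 d a n x : a + n <= d -> a < x <= a + n -> stp d (iota a n) x = (x.-1, [:: x]).
Proof.
elim: n a => [|n IH] a h hx; first lia.
rewrite /= -/(iota _ _).
have [ex|nx] := eqVneq x a.+1.
  rewrite st1_nxt; first (rewrite U3 /=; first (by rewrite ex nxt_lt //; lia); lia).
  - by rewrite nxt_lt //; lia.
  - apply/eqP; lia.
rewrite st1_oth; first (rewrite IH //=; lia).
- apply/eqP; lia.
- rewrite nxt_lt; last lia. by [].
Qed.

Fixpoint dn (h n : nat) : seq nat := if n is n'.+1 then h :: dn h.-1 n' else [::].

Lemma D3 d h n x : h < d -> (x + n <= h) || (h.+1 < x) -> stp d (dn h n) x = (x, [::]).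
Proof.
elim: n h => [|n IH] h hd hx //=.
rewrite st1_oth; first (rewrite IH //=; lia).
- apply/eqP; lia.
- rewrite nxt_lt; last lia. apply/eqP; lia.
Qed.

Lemma D2 d h n x : h < d -> 0 < x -> h < x + n -> x <= h -> stp d (dn h n) x = (x.+1, [:: x]).
Proof.
elim: n h => [|n IH] h hd h0 h1 h2; first lia.
rewrite /=.
have [ex|nx] := eqVneq x h.
  rewrite ex st1_eq nxt_lt // D3 //=; lia.
rewrite st1_oth; first (rewrite IH //=; lia).
- by [].
- rewrite nxt_lt; last lia. apply/eqP; lia.
Qed.

Lemma D1 d h n : h < d -> n <= h -> stp d (dn h n) h.+1 = (h.+1 - n, dn h.+1 n).
Proof.
elim: n h => [|n IH] h hd hn; first by rewrite subn0.
rewrite /= st1_nxt; [| by rewrite nxt_lt | apply/eqP; lia].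
rewrite /=.
have -> : h = h.-1.+1 by lia.
rewrite IH; [|lia|lia].
rewrite /= nxt_lt; last lia.
by congr pair; lia.
Qed.

Lemma orbit d s (x : nat -> nat) (t : nat -> seq nat) m :
  (forall k, k < m -> stp d s (x k) = (x k.+1, t k)) ->
  forall k v, k <= m ->
  iter k (act_prod d s) (x 0 :: v) = x k :: act_prod d (flatten (map t (iota 0 k))) v.
Proof.
move=> H; elim=> [|k IH] v hk //.
rewrite iterS IH; last lia.
rewrite act_stp H; last lia.
have -> : iota 0 k.+1 = iota 0 k ++ [:: k] by rewrite -addn1 iotaD.
by rewrite map_cat flatten_cat /= cats0 /act_prod foldl_cat.
Qed.

Lemma iter_sec (f g : seq nat -> seq nat) x :
  (forall v, f (x :: v) = x :: g v) -> forall q v, iter q f (x :: v) = x :: iter q g v.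
Proof. by move=> H; elim=> [|q IH] v //=; rewrite IH H. Qed.

Lemma orbit_ret d s x t m :
  (forall k, k < m -> stp d s (x k) = (x k.+1, t k)) -> x m = x 0 ->
  forall v, iter m (act_prod d s) (x 0 :: v) = x 0 :: act_prod d (flatten (map t (iota 0 m))) v.
Proof. by move=> H e v; rewrite (orbit H) // e. Qed.

Lemma orbit_period d s x t m : 0 < m ->
  (forall k, k < m -> stp d s (x k) = (x k.+1, t k)) -> x m = x 0 ->
  (forall j, 0 < j < m -> x j != x 0) ->
  forall n, iter n (act_prod d s) [:: x 0] = [:: x 0] -> m %| n.
Proof.
move=> hm H e Hx n.
rewrite {1}(divn_eq n m) addnC iterD iterM (iter_sec (orbit_ret H e)) (orbit H); last first.
  by apply: ltnW; rewrite ltn_pmod.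
case=> ex.
rewrite /dvdn; have [->|hpos] := posnP (n %% m); first by [].
have := Hx (n %% m); rewrite ex eqxx hpos ltn_pmod //; by move/(_ isT).
Qed.

Lemma transfer d (h g : seq nat -> seq nat) x m : 0 < m -> is_letter d x ->
  (forall v, iter m h (x :: v) = x :: g v) -> infinite_order d g -> infinite_order d h.
Proof.
move=> hm hx H Hg n hn.
have [w [hw hne]] := Hg n hn.
apply: NNPP => Hno.
have Hall : forall u, is_vertex d u -> iter n h u = u.
  move=> u hu; apply: NNPP => hne'; apply: Hno; by exists u.
have E1 : iter (n * m) h (x :: w) = x :: iter n g w.
  by rewrite iterM; apply: iter_sec.
have E2 : iter (n * m) h (x :: w) = x :: w.
  rewrite mulnC iterM; apply: iter_fix; apply: Hall; by rewrite /= hx.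
by apply: hne; rewrite E1 in E2; case: E2.
Qed.

Lemma cycle_abs d (hP hR : seq nat -> seq nat) m : 1 < m -> 2 <= d ->
  (forall v, iter m hP (2 :: v) = 2 :: hR v) ->
  (forall n, iter n hP [:: 2] = [:: 2] -> m %| n) ->
  (forall v, iter m hR (1 :: v) = 1 :: hP v) ->
  (forall n, iter n hR [:: 1] = [:: 1] -> m %| n) ->
  infinite_order d hP.
Proof.
move=> hm hd HA HB HC HD n.
elim: n {-2}n (leqnn n) => [|N IH] n hnN hn; first lia.
have v2 : is_vertex d [:: 2] by rewrite /= /is_letter hd.
have v1 : is_letter d 1 by rewrite /is_letter; lia.
have [E1|E1] := eqVneq (iter n hP [:: 2]) [:: 2]; last by exists [:: 2]; split => //; apply/eqP.
have /dvdnP [n1 en] := HB _ E1.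
have F1 : forall v, iter n hP (2 :: v) = 2 :: iter n1 hR v.
  by move=> v; rewrite en iterM; apply: iter_sec.
have [E2|E2] := eqVneq (iter n1 hR [:: 1]) [:: 1]; last first.
  exists [:: 2; 1]; split; first by rewrite /= v1 /is_letter hd.
  by rewrite F1 => -[]; apply/eqP.
have /dvdnP [n2 en2] := HD _ E2.
have F2 : forall v, iter n1 hR (1 :: v) = 1 :: iter n2 hP v.
  by move=> v; rewrite en2 iterM; apply: iter_sec.
have h1 : n2 <= N by rewrite en en2 in hnN hn; nia.
have h2 : 0 < n2 by rewrite en en2 in hn; nia.
have [w [hw hne]] := IH n2 h1 h2.
exists [:: 2, 1 & w]; split; first by rewrite /= v1 /is_letter hd hw.
by rewrite F1 F2 => -[].
Qed.

Definition Q q := iota 1 q ++ dn q.+1 q.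
Definition R d := [:: 2; 1] ++ dn d (d - 2).

Lemma flat_dn c a n : flatten (map (fun k => [:: c - k]) (iota a n)) = dn (c - a) n.
Proof.
elim: n a => [|n IH] a //=.
by rewrite IH subnS.
Qed.

Lemma dn_rcons h n : dn h n ++ [:: h - n] = dn h n.+1.
Proof.
elim: n h => [|n IH] h; first by rewrite /= subn0.
change (h :: (dn h.-1 n ++ [:: h - n.+1]) = h :: dn h.-1 n.+1).
by rewrite -IH; congr (_ :: _ ++ [:: _]); lia.
Qed.

Lemma iota_r a n : iota a n.+1 = iota a n ++ [:: a + n].
Proof. by have := iotaD a n 1; rewrite addn1. Qed.

Lemma flat_add2 a n : flatten (map (fun k => [:: k.+2]) (iota a n)) = iota a.+2 n.
Proof. by elim: n a => [|n IH] a //=; rewrite IH. Qed.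

Lemma step1 d i : 1 <= i -> i < d -> forall v,
  iter i.+1 (act_prod d (iota 1 i)) (1 :: v) = 1 :: act_prod d (Q i) v.
Proof.
move=> h1 h2 v.
pose x k := if k == 0 then 1 else i.+2 - k.
pose t k := if k == 0 then iota 1 i else [:: i.+2 - k].
have H : forall k, k < i.+1 -> stp d (iota 1 i) (x k) = (x k.+1, t k).
  move=> k hk; rewrite /x /t; case: k hk => [|k] hk /=.
  - rewrite U1; last lia. congr pair; lia.
  - rewrite U2; [|lia|lia]. congr pair; lia.
have e : x i.+1 = x 0 by rewrite /x /=; lia.
have := orbit_ret H e v; rewrite /x /= => ->.
congr (_ :: act_prod d _ v).
rewrite /t /= -/(iota 1 i).
have -> : [seq (if k == 0 then iota 1 i else [:: i.+2 - k]) | k <- iota 1 i] = map (fun k => [:: i.+2 - k]) (iota 1 i).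
  apply/eq_in_map => k; rewrite mem_iota; case: eqP => //; lia.
by rewrite flat_dn subn1.
Qed.

Lemma step2 d q : 1 <= q -> q.+2 <= d -> forall v,
  iter 3 (act_prod d (Q q)) (1 :: v) = 1 :: act_prod d (Q q.+1) v.
Proof.
move=> h1 h2 v.
pose x k := if k == 0 then 1 else if k == 1 then q.+2 else if k == 2 then 2 else 1.
pose t k := if k == 0 then iota 1 q ++ [:: q.+1] else if k == 1 then dn q.+2 q else [:: 2].
have H : forall k, k < 3 -> stp d (Q q) (x k) = (x k.+1, t k).
  move=> k hk; rewrite /x /t /Q stp_cat; case: k hk => [|[|[|k]]] hk //=.
  - rewrite U1 /=; last lia. rewrite D2 /=; [|lia|lia|lia|lia]. by rewrite add1n.
  - rewrite U3 /=; [|lia|lia]. rewrite D1 /=; [|lia|lia]. congr pair; lia.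
  - rewrite U2 /=; [|lia|lia]. by rewrite D3 /=; [|lia|lia].
have e : x 3 = x 0 by [].
have E : flatten (map t (iota 0 3)) = Q q.+1.
  rewrite /t /= /Q.
  rewrite iota_r add1n.
  rewrite -!catA; congr (_ ++ _); rewrite /=; congr (_ :: _).
  change (dn q.+2 q ++ [:: 2] = dn q.+2 q.+1); rewrite -dn_rcons.
  by have -> : q.+2 - q = 2 by lia.
by have := orbit_ret H e v; rewrite E.
Qed.

Lemma stp_cat' d s1 s2 x y z t1 t2 : stp d s1 x = (y, t1) -> stp d s2 y = (z, t2) ->
  stp d (s1 ++ s2) x = (z, t1 ++ t2).
Proof. by move=> h1 h2; rewrite stp_cat h1 /= h2. Qed.

Lemma stp_cons' d j s x y z t1 t2 : st1 d j x = (y, t1) -> stp d s y = (z, t2) ->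
  stp d (j :: s) x = (z, t1 ++ t2).
Proof. by move=> h1 h2; rewrite stp_cons h1 /= h2. Qed.

Lemma step3 d : 3 <= d -> forall v,
  iter 1 (act_prod d (Q d.-1)) (1 :: v) = 1 :: act_prod d (iota 1 d) v.
Proof.
move=> hd v.
have [k ek] : exists k, d = k.+3 by exists (d - 3); lia.
subst d.
have E : stp k.+3 (Q k.+2) 1 = (1, iota 1 k.+3).
  rewrite iota_r; apply: stp_cat'; first by apply: U1; lia.
  change (stp k.+3 (k.+3 :: dn k.+2 k.+1) (1 + k.+2) = (1, [:: 1 + k.+2])).
  rewrite add1n -[[:: k.+3]]cats0.
  apply: stp_cons'; first by rewrite st1_eq nxt_d.
  by apply: D3; lia.
by change (act_prod k.+3 (Q k.+2) (1 :: v) = 1 :: act_prod k.+3 (iota 1 k.+3) v); rewrite act_stp E.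
Qed.

Lemma iota_last d : 0 < d -> iota 1 d = iota 1 d.-1 ++ [:: d].
Proof. by move=> h; rewrite -{1}(prednK h) iota_r add1n prednK. Qed.

Lemma stp_d_oth d x : 1 < x < d -> stp d [:: d] x = (x, [::]).
Proof. move=> h; rewrite /= st1_oth //; [apply/eqP; lia | rewrite nxt_d; [apply/eqP|]; lia]. Qed.

Lemma step4 d : 3 <= d ->
  (forall v, iter d.-1 (act_prod d (iota 1 d)) (2 :: v) = 2 :: act_prod d (R d) v) /\
  (forall n, iter n (act_prod d (iota 1 d)) [:: 2] = [:: 2] -> d.-1 %| n).
Proof.
move=> hd.
pose x j := if j == 0 then 2 else d.+1 - j.
pose t j := if j == 0 then [:: 2; 1] else [:: d.+1 - j].
have H : forall j, j < d.-1 -> stp d (iota 1 d) (x j) = (x j.+1, t j).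
  move=> j hj; rewrite (@iota_last d); last lia.
  rewrite /x /t; case: j hj => [|j] hj /=.
  - rewrite (_ : d.+1 - 1 = d); last lia.
    rewrite -[[:: 2; 1]]/([:: 2] ++ [:: 1]).
    apply: (stp_cat' (y := 1)); first by apply: U2; lia.
    rewrite /= (@st1_nxt d d 1) ?nxt_d //; try lia; apply/eqP; lia.
  - rewrite -[[:: d.+1 - j.+1]]cats0.
    apply: (stp_cat' (y := d.+1 - j.+2)); last by apply: stp_d_oth; lia.
    rewrite U2; [congr pair | | ]; clear -hj hd; lia.
have e : x d.-1 = x 0 by rewrite /x /=; case: eqP; lia.
have Hx : forall j, 0 < j < d.-1 -> x j != x 0.
  move=> j hj; have [ej|nz] := eqVneq j 0; first lia.
  rewrite /x /= (negbTE nz); apply/eqP; lia.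
have hm : 0 < d.-1 by lia.
split; last by move=> n; exact (orbit_period hm H e Hx (n:=n)).
move=> v; have := orbit_ret H e v.
have -> : flatten (map t (iota 0 d.-1)) = R d.
  have -> : d.-1 = (d - 2).+1 by lia.
  rewrite /= -/(iota 1 (d - 2)) /R.
  have -> : [seq t k | k <- iota 1 (d - 2)] = map (fun k => [:: d.+1 - k]) (iota 1 (d - 2)).
    apply/eq_in_map => k; rewrite mem_iota /t; case: eqP => //; lia.
  by rewrite flat_dn subn1.
by [].
Qed.

Lemma T1 d : 3 <= d -> stp d [:: 2; 1; d] 1 = (2, [:: 1]).
Proof.
move=> hd.
apply: (stp_cons' (y := 1) (t1 := [::])); first by apply: st1_oth => //; rewrite nxt_lt //; lia.
apply: (stp_cons' (y := 2) (t1 := [:: 1])); first by rewrite st1_eq nxt_lt //; lia.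
by apply: stp_d_oth; lia.
Qed.

Lemma T2 d : 4 <= d -> stp d [:: 2; 1; d] 2 = (3, [:: 2]).
Proof.
move=> hd.
apply: (stp_cons' (y := 3) (t1 := [:: 2])); first by rewrite st1_eq nxt_lt //; lia.
apply: (stp_cons' (y := 3) (t1 := [::])); first by apply: st1_oth => //; rewrite nxt_lt //; lia.
by apply: stp_d_oth; lia.
Qed.

Lemma T3 d y : 4 <= y < d -> stp d [:: 2; 1; d] y = (y, [::]).
Proof.
move=> hd.
apply: (stp_cons' (y := y) (t1 := [::])).
  by apply: st1_oth; [apply/eqP; lia | rewrite nxt_lt; [apply/eqP|]; lia].
apply: (stp_cons' (y := y) (t1 := [::])).
  by apply: st1_oth; [apply/eqP; lia | rewrite nxt_lt; [apply/eqP|]; lia].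
by apply: stp_d_oth; lia.
Qed.

Lemma T4 d : 4 <= d -> stp d [:: 2; 1; d] d = (1, [:: d]).
Proof.
move=> hd.
apply: (stp_cons' (y := d) (t1 := [::])).
  by apply: st1_oth; [apply/eqP; lia | rewrite nxt_lt; [apply/eqP|]; lia].
apply: (stp_cons' (y := d) (t1 := [::])).
  by apply: st1_oth; [apply/eqP; lia | rewrite nxt_lt; [apply/eqP|]; lia].
apply: (stp_cons' (y := 1) (t1 := [:: d])); last by [].
by rewrite st1_eq nxt_d //; lia.
Qed.

Lemma eR d : 3 <= d -> R d = [:: 2; 1; d] ++ dn d.-1 (d - 3).
Proof. by move=> hd; rewrite /R (_ : d - 2 = (d - 3).+1) //; lia. Qed.

Lemma step5 d : 3 <= d ->
  (forall v, iter d.-1 (act_prod d (R d)) (1 :: v) = 1 :: act_prod d (iota 1 d) v) /\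
  (forall n, iter n (act_prod d (R d)) [:: 1] = [:: 1] -> d.-1 %| n).
Proof.
move=> hd.
pose x j := if j == 0 then 1 else if j == 1 then 2 else if j == d.-1 then 1 else j.+2.
pose t j := if j == 0 then [:: 1] else if j == 1 then [:: 2; 3] else [:: j.+2].
have x0 : x 0 = 1 by [].
have x1 : x 1 = 2 by [].
have xl : x d.-1 = 1.
  rewrite /x; have -> : (d.-1 == 0) = false by apply/eqP; lia.
  have -> : (d.-1 == 1) = false by apply/eqP; lia.
  by rewrite eqxx.
have xe : forall j, 1 < j -> j != d.-1 -> x j = j.+2.
  move=> j h1 h2; rewrite /x (negbTE h2).
  have -> : (j == 0) = false by apply/eqP; lia.
  by have -> : (j == 1) = false by apply/eqP; lia.
have t0 : t 0 = [:: 1] by [].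
have t1 : t 1 = [:: 2; 3] by [].
have te : forall j, 1 < j -> t j = [:: j.+2].
  move=> j h1; rewrite /t.
  have -> : (j == 0) = false by apply/eqP; lia.
  by have -> : (j == 1) = false by apply/eqP; lia.
have H : forall j, j < d.-1 -> stp d (R d) (x j) = (x j.+1, t j).
  move=> j hj; rewrite eR //.
  case: j hj => [|[|j]] hj.
  - rewrite x0 x1 t0; apply: (stp_cat' (y := 2) (t1 := [:: 1])); first exact: T1.
    by apply: D3; lia.
  - rewrite x1 t1.
    have [e3|n3] := eqVneq d 3.
      subst d; rewrite xl; by [].
    rewrite xe //; last (apply/eqP; lia).
    rewrite -[[:: 2; 3]]/([:: 2] ++ [:: 3]).
    apply: (stp_cat' (y := 3)); first (apply: T2; lia).
    by apply: D2; lia.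
  - rewrite xe //; last (apply/eqP; lia).
    rewrite te //.
    have [ed|nd] := eqVneq j.+4 d.
      have xl' : x j.+3 = 1 by rewrite -xl -ed.
      rewrite xl' -[[:: j.+4]]cats0.
      apply: (stp_cat' (y := 1)); first by rewrite ed; apply: T4; lia.
      by apply: D3; lia.
    rewrite xe //; last (apply/eqP; lia).
    apply: (stp_cat' (y := j.+4) (t1 := [::]) (t2 := [:: j.+4])); first (apply: T3; lia).
    by apply: D2; lia.
have e : x d.-1 = x 0 by rewrite xl.
have Hx : forall j, 0 < j < d.-1 -> x j != x 0.
  move=> j hj; rewrite x0; case: j hj => [|[|j]] hj //.
  by rewrite xe //; apply/eqP; lia.
have hm : 0 < d.-1 by lia.
split; last by move=> n; exact (orbit_period hm H e Hx (n:=n)).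
move=> v; have := orbit_ret H e v.
have -> : flatten (map t (iota 0 d.-1)) = iota 1 d.
  have -> : d.-1 = (d - 3).+2 by lia.
  rewrite /= -/(iota 2 (d - 3)).
  have -> : [seq t k | k <- iota 2 (d - 3)] = map (fun k => [:: k.+2]) (iota 2 (d - 3)).
    apply/eq_in_map => k; rewrite mem_iota => hk; apply: te; lia.
  rewrite flat_add2.
  by symmetry; rewrite -{1}(subnKC hd) iotaD.
by [].
Qed.

Lemma cycleP d : 3 <= d -> infinite_order d (act_prod d (iota 1 d)).
Proof.
move=> hd; have [A B] := step4 hd; have [C D] := step5 hd.
apply: (cycle_abs (m := d.-1)) => //; lia.
Qed.

Lemma Qinf d : 3 <= d -> forall q, 1 <= q -> q <= d.-1 -> infinite_order d (act_prod d (Q q)).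
Proof.
move=> hd q; move e: (d.-1 - q) => n; elim: n q e => [|n IH] q e h1 h2.
  have -> : q = d.-1 by lia.
  apply: (transfer (x := 1) (m := 1) _ _ (step3 hd)) => //; last exact: cycleP.
  rewrite /is_letter; lia.
apply: (transfer (x := 1) (m := 3) _ _ (step2 (d := d) h1 _)) => //.
- rewrite /is_letter; lia.
- lia.
- apply: IH; lia.
Qed.

Theorem lemma3p6 (d i : nat) (hd : 3 <= d) (hi1 : 1 <= i) (hid : i < d) :
  infinite_order d (act_prod d (iota 1 i)).
Proof.
apply: (transfer (x := 1) (m := i.+1) _ _ (step1 hi1 hid)) => //.
- rewrite /is_letter; lia.
- apply: Qinf => //; lia.
Qed.
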